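(* Consider finitely many tanks, each colored red or blue, with arbitrary real initial water levels $x_a$. Arrange the tanks in a row in order of decreasing initial water level, breaking ties so that among tanks of equal level, all blue tanks are placed to the left of all red tanks. Consider any execution of the following procedure: while some red tank is positioned (anywhere) to the left of some blue tank in the row, choose any red tank $a$ immediately to the left of (i.e. adjacent to) a blue tank $b$, equilibrate $a$ and $b$, and then swap the positions of $a$ and $b$ in the row. Then this procedure terminates, and the total amount of water in the blue tanks at the end is at least as large as the total amount of water in the blue tanks at the end of any other finite sequence of pairwise equilibrations applied to the same initial configuration.
   Context: Equilibrating two tanks $a \neq b$ with water levels $x_a, x_b$ replaces both levels by $\frac{x_a+x_b}{2}$ and leaves all other tanks unchanged. A strategy is a finite sequence of pairs of distinct tanks, executed as the corresponding equilibrations; ''transferring more water from the red tanks to the blue tanks'' means ending with a larger total amount of water in the blue tanks. *)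

(* Defs.v *)
From HB Require Import structures.
From mathcomp Require Import all_boot all_order all_algebra.
Set Implicit Arguments. Unset Strict Implicit. Unset Printing Implicit Defensive.
Import Order.TTheory GRing.Theory Num.Theory.
Local Open Scope ring_scope.

(* Tanks are 'I_n.  A colouring is col : 'I_n -> bool with
   col a = true meaning "a is blue", col a = false meaning "a is red". *)

Section Tanks.
Variables (R : realFieldType) (n : nat).

Definition equilibrate (x : 'I_n -> R) (a b : 'I_n) : 'I_n -> R :=
  fun t => if (t == a) || (t == b) then (x a + x b) / 2 else x t.

Definition valid_strategy (s : seq ('I_n * 'I_n)) : bool :=
  all (fun p => p.1 != p.2) s.

Definition run_strategy (x : 'I_n -> R) (s : seq ('I_n * 'I_n)) : 'I_n -> R :=
  foldl (fun y p => equilibrate y p.1 p.2) x s.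

Definition blue_total (col : 'I_n -> bool) (x : 'I_n -> R) : R :=
  \sum_(a < n | col a) x a.

(* Initial row: every tank exactly once, in order of decreasing level, with
   ties broken so that blue tanks come before red tanks of the same level.
   [row_before a b] : a may be placed (anywhere) to the left of b. *)
Definition row_before (col : 'I_n -> bool) (x : 'I_n -> R) (a b : 'I_n) : bool :=
  (x b < x a) || ((x a == x b) && (col a || ~~ col b)).

Definition initial_row (col : 'I_n -> bool) (x : 'I_n -> R) (r : seq 'I_n) : Prop :=
  perm_eq r (enum 'I_n) /\ pairwise (row_before col x) r.

Definition state := (('I_n -> R) * seq 'I_n)%type.

Definition proc_step (col : 'I_n -> bool) (s s' : state) : Prop :=
  exists (r1 r2 : seq 'I_n) (a b : 'I_n),
    [/\ s.2 = r1 ++ a :: b :: r2, ~~ col a, col b,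
        s'.1 = equilibrate s.1 a b & s'.2 = r1 ++ b :: a :: r2].

Definition red_left_of_blue (col : 'I_n -> bool) (r : seq 'I_n) : Prop :=
  exists (r1 r2 r3 : seq 'I_n) (a b : 'I_n),
    [/\ r = r1 ++ a :: r2 ++ b :: r3, ~~ col a & col b].

Inductive reaches (col : 'I_n -> bool) : state -> state -> Prop :=
  | reaches_refl s : reaches col s s
  | reaches_step s s' s'' : proc_step col s s' -> reaches col s' s'' -> reaches col s s''.
End Tanks.

(* Main.v *)
From HB Require Import structures.
From mathcomp Require Import all_boot all_order all_algebra.
From mathcomp Require Import ring lra zify.
Require Import Defs.
Set Implicit Arguments. Unset Strict Implicit. Unset Printing Implicit Defensive.
Import Order.TTheory GRing.Theory Num.Theory.
Local Open Scope ring_scope.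

Section FF.
Variable R : realFieldType.

Fixpoint F (p q : nat) {struct p} : R :=
  match p with
  | 0%N => 0
  | p'.+1 => let fix G (q : nat) : R := match q with 0%N => 0 | q'.+1 => (F p' q'.+1 + G q' + 1) / 2 end in G q
  end.

Lemma F0q q : F 0 q = 0. Proof. by []. Qed.
Lemma Fp0 p : F p 0 = 0. Proof. by case: p. Qed.
Lemma FS p q : F p.+1 q.+1 = (F p q.+1 + F p.+1 q + 1) / 2. Proof. by []. Qed.

Lemma maxpr (X : nat -> nat -> R) :
  (forall p q, X p.+1 q.+1 = (X p q.+1 + X p.+1 q) / 2) ->
  (forall q, 0 <= X 0%N q) -> (forall p, 0 <= X p 0%N) -> forall p q, 0 <= X p q.
Proof.
move=> rec h0 h1; elim=> [|p IH] q; first exact: h0.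
elim: q => [|q IHq]; first exact: h1.
rewrite rec; apply: divr_ge0 => //; exact: addr_ge0.
Qed.

Lemma Fsym p q : F p q = F q p.
Proof.
elim: p q => [|p IHp] q; first by rewrite Fp0.
elim: q => [|q IHq]; first by rewrite Fp0.
by rewrite !FS IHp IHq (addrC (F q.+1 p)).
Qed.

Lemma F1le q : F 1 q <= 1.
Proof. elim: q => [|q IH]; first by rewrite Fp0 ler01. rewrite FS F0q; lra. Qed.

Lemma Fp1le p : F p 1 <= 1.
Proof. by rewrite Fsym F1le. Qed.

Lemma FA p q : F p.+2 q - F p.+1 q <= F p.+1 q - F p q.
Proof.
rewrite -subr_ge0.
pose X p q := (F p.+1 q - F p q) - (F p.+2 q - F p.+1 q).
have -> : (F p.+1 q - F p q - (F p.+2 q - F p.+1 q)) = X p q by [].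
suff H : forall p q, 0 <= X p q by exact: H.
apply: (@maxpr X) => {p q}.
- by move=> p q; rewrite /X !FS; field.
- move=> q; rewrite /X F0q.
  have : 0 <= 2 * F 1 q - F 2 q.
    elim: q => [|q IH]; first by rewrite !Fp0; lra.
    rewrite (FS 1) FS F0q.
    have := F1le q; lra.
  lra.
- by move=> p; rewrite /X !Fp0 subrr.
Qed.

Lemma FC p q : F p.+1 q - F p q <= F p.+1 q.+1 - F p q.+1.
Proof.
rewrite -subr_ge0.
pose X p q := (F p.+1 q.+1 - F p q.+1) - (F p.+1 q - F p q).
have -> : (F p.+1 q.+1 - F p q.+1 - (F p.+1 q - F p q)) = X p q by [].
suff H : forall p q, 0 <= X p q by exact: H.
apply: (@maxpr X) => {p q}.
- by move=> p q; rewrite /X !FS; field.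
- move=> q; rewrite /X !F0q FS F0q; have := F1le q; lra.
- move=> p; rewrite /X !Fp0 FS Fp0; have := Fp1le p; lra.
Qed.

Lemma FB p q : F p q.+2 - F p q.+1 <= F p q.+1 - F p q.
Proof. rewrite ![F p _]Fsym; exact: FA. Qed.

Lemma FE p q : F p.+1 q + F p q.+1 <= 1 + 2 * F p q.
Proof.
rewrite -subr_ge0.
pose X p q := 1 + 2 * F p q - (F p.+1 q + F p q.+1).
have -> : 1 + 2 * F p q - (F p.+1 q + F p q.+1) = X p q by [].
suff H : forall p q, 0 <= X p q by exact: H.
apply: (@maxpr X) => {p q}.
- by move=> p q; rewrite /X !FS; field.
- move=> q; rewrite /X !F0q; have := F1le q; lra.
- move=> p; rewrite /X !Fp0; have := Fp1le p; lra.
Qed.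

Definition mg (b : bool) (p q : nat) : R :=
  if b then (if q is q'.+1 then 1 + F p q' - F p q'.+1 else 0) else F p.+1 q - F p q.
Definition np (b : bool) (p : nat) : nat := if b then p else p.+1.
Definition nq (b : bool) (q : nat) : nat := if b then q.-1 else q.

Lemma np_comm b1 b2 p : np b1 (np b2 p) = np b2 (np b1 p).
Proof. by case: b1; case: b2. Qed.
Lemma nq_comm b1 b2 q : nq b1 (nq b2 q) = nq b2 (nq b1 q).
Proof. by case: b1; case: b2. Qed.

Lemma mg_sum b1 b2 p q :
  mg b1 p q + mg b2 (np b1 p) (nq b1 q) = mg b2 p q + mg b1 (np b2 p) (nq b2 q).
Proof.
case: b1; case: b2; rewrite /mg /np /nq //; case: q => [|q]; cbn -[F]; rewrite ?Fp0; ring.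
Qed.

Lemma mg_sub b1 b2 p q : mg b2 (np b1 p) (nq b1 q) <= mg b2 p q.
Proof.
case: b1; case: b2; rewrite /mg /np /nq.
- case: q => [|[|q]]; cbn -[F]; first by [].
  + rewrite Fp0; have := Fp1le p; lra.
  + have := FB p q; lra.
- case: q => [|q]; cbn -[F]; first by rewrite lexx.
  exact: FC.
- case: q => [|q]; cbn -[F]; first by [].
  have := FC p q; lra.
- exact: FA.
Qed.

Lemma mg_chain b1 b2 p q : mg b2 (np b1 p) (nq b1 q) <= mg b1 p q.
Proof.
case: b1; case: b2; rewrite /mg /np /nq.
- case: q => [|[|q]]; cbn -[F]; first by [].
  + rewrite Fp0; have := Fp1le p; lra.
  + have := FB p q; lra.
- case: q => [|q]; cbn -[F]; first by rewrite !Fp0 subrr.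
  have := FE p q; lra.
- case: q => [|q]; cbn -[F]; first by rewrite !Fp0 subrr.
  rewrite FS; lra.
- exact: FA.
Qed.

Lemma mg_rb p q : mg false p q = mg true p.+1 q.
Proof. case: q => [|q]; cbn -[F]; first by rewrite !Fp0 subrr. by rewrite FS; field. Qed.

Lemma mid_le (a b ma mb : R) : b <= a -> mb <= ma -> (a + b) / 2 * (ma + mb) <= a * ma + b * mb.
Proof. move=> h1 h2; have h3 : 0 <= (a - b) * (ma - mb) by apply: mulr_ge0; rewrite subr_ge0. nra. Qed.
End FF.

Section Lists.
Variables (R : realFieldType) (n : nat) (col : 'I_n -> bool).

Fixpoint M (p q : nat) (l : seq 'I_n) (y : 'I_n -> R) : R :=
  if l is a :: l' then y a * mg R (col a) p q + M (np (col a) p) (nq (col a) q) l' y else 0.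

Lemma M_cat p q l1 l2 y :
  M p q (l1 ++ l2) y = M p q l1 y + M (p + count (predC col) l1) (q - count col l1) l2 y.
Proof.
elim: l1 p q => [|a l1 IH] p q /=; first by rewrite add0r addn0 subn0.
rewrite IH addrA; congr (_ + M _ _ _ _); rewrite /np /nq; case: (col a) => /=; lia.
Qed.

Lemma M_eq_in p q l y y' : {in l, y =1 y'} -> M p q l y = M p q l y'.
Proof.
elim: l p q => [|a l IH] p q //= h.
have h' : {in l, y =1 y'} by move=> b hb; apply: h; rewrite in_cons hb orbT.
by rewrite h ?mem_head // IH.
Qed.

Lemma M_q0 p l y : M p 0 l y = 0.
Proof.
elim: l p => [|a l IH] p //=.
have -> : nq (col a) 0 = 0%N by case: (col a).
rewrite IH addr0; case: (col a); rewrite /mg ?Fp0 ?subrr ?mulr0 //.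
Qed.

Lemma M_swap p q u a l y : y u <= y a -> M p q (u :: a :: l) y <= M p q (a :: u :: l) y.
Proof.
move=> h /=.
rewrite (np_comm (col a)) (nq_comm (col a)) !addrA lerD2r.
have s1 := mg_sum R (col u) (col a) p q.
have s2 := mg_sub R (col u) (col a) p q.
move: s1 s2.
set m1 := mg R (col u) p q; set m2 := mg R (col a) _ _;
set m3 := mg R (col a) p q; set m4 := mg R (col u) _ _ => s1 s2.
have h3 : 0 <= (y a - y u) * (m3 - m2) by apply: mulr_ge0; rewrite subr_ge0.
nra.
Qed.

Lemma M_cons_le u l l' y : (forall p q, M p q l y <= M p q l' y) ->
  forall p q, M p q (u :: l) y <= M p q (u :: l') y.
Proof. by move=> h p q /=; rewrite lerD2l. Qed.

Lemma M_front a t1 t2 y : all (fun u => y u <= y a) t1 ->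
  forall p q, M p q (t1 ++ a :: t2) y <= M p q (a :: t1 ++ t2) y.
Proof.
elim: t1 => [|u t1 IH] /=; first by move=> _ p q; rewrite lexx.
case/andP=> hu ht p q.
apply: (le_trans _ (M_swap p q (t1 ++ t2) hu)).
exact: M_cons_le (IH ht) p q.
Qed.

Lemma M_edmonds y s : pairwise (fun a b => y b <= y a) s ->
  forall t, perm_eq t s -> forall p q, M p q t y <= M p q s y.
Proof.
elim: s => [|a s IH] /=.
  by move=> _ t; move/perm_nilP => -> p q; rewrite lexx.
case/andP=> ha hs t pt.
have ta : a \in t by rewrite (perm_mem pt) mem_head.
move: pt; case/splitPr: ta => t1 t2 pt.
move=> p q.
have hall : all (fun u => y u <= y a) t1.
  apply/allP=> u hu.
  have : u \in a :: s by rewrite -(perm_mem pt) mem_cat hu.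
  rewrite in_cons; case/orP=> [/eqP -> //|us].
  exact: (allP ha).
apply: (le_trans (M_front t2 hall p q)).
apply: M_cons_le => p' q'; apply: IH => //.
by rewrite -(perm_cons a); apply: perm_trans pt; rewrite perm_sym (perm_catCA t1 [:: a] t2).
Qed.

Fixpoint nrb (l : seq 'I_n) : bool :=
  if l is a :: l' then (if col a then nrb l' else ~~ has col l') else true.

Lemma M_nrb l y : nrb l -> M 0 (count col l) l y = \sum_(a <- l | col a) y a.
Proof.
elim: l => [|a l IH] /=; first by rewrite big_nil.
rewrite big_cons; case ca: (col a) => /= h.
  rewrite /np /nq /= -IH // /mg /= ?F0q; ring.
have c0 : count col l = 0%N by move: h; rewrite has_count; case: (count col l).
rewrite c0 M_q0 big_hasC // /mg /=; rewrite ?Fp0; ring.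
Qed.

Lemma rlob_nrb r : ~ red_left_of_blue col r -> nrb r.
Proof.
elim: r => [|a r IH] //= h.
case ca: (col a).
  apply: IH => -[r1 [r2 [r3 [a' [b [e h1 h2]]]]]]; apply: h.
  by exists (a :: r1), r2, r3, a', b; rewrite e.
apply/negP => /hasP [b br cb]; apply: h.
case/splitPr: br => r2 r3.
by exists [::], r2, r3, a, b; rewrite ca.
Qed.

Lemma blue_perm l (y : 'I_n -> R) : perm_eq l (enum 'I_n) -> blue_total col y = \sum_(a <- l | col a) y a.
Proof.
move=> pl; rewrite (perm_big _ pl) /blue_total.
by rewrite enumT unlock.
Qed.

Definition K := count col (enum 'I_n).

Lemma blue_M l (y : 'I_n -> R) : perm_eq l (enum 'I_n) -> nrb l -> blue_total col y = M 0 K l y.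
Proof.
move=> pl hl; rewrite (blue_perm y pl) -M_nrb //.
by rewrite /K (permP pl).
Qed.

Lemma pairwise_insert (r : rel 'I_n) s1 s2 c d :
  pairwise r (s1 ++ c :: s2) -> (forall x, r x c -> r x d) -> (forall x, r c x -> r d x) -> r c d ->
  pairwise r (s1 ++ c :: d :: s2).
Proof.
move=> h h1 h2 h3; elim: s1 h => [|x s1 IH]; rewrite ?cat0s ?cat_cons.
  rewrite !pairwise_cons /= => /andP [a1 ->]; rewrite h3 a1 /= andbT.
  by apply: sub_all a1 => z; exact: h2.
rewrite !pairwise_cons => /andP [a1 /IH ->]; rewrite andbT.
move: a1; rewrite !all_cat /= => /and3P [-> hc ->]; rewrite hc /= andbT.
exact: h1.
Qed.

Lemma perm_ins s1 s2 (c d : 'I_n) : perm_eq (s1 ++ c :: d :: s2) (d :: s1 ++ c :: s2).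
Proof. apply/permP => P; rewrite /= !count_cat /=; lia. Qed.

Lemma perm_sw s1 s2 (c d : 'I_n) : perm_eq (s1 ++ c :: d :: s2) (s1 ++ d :: c :: s2).
Proof. apply/permP => P; rewrite /= !count_cat /=; lia. Qed.

Lemma sorted_adj (z : 'I_n -> R) c d : c != d -> z c = z d ->
  exists s1 s2, perm_eq (s1 ++ c :: d :: s2) (enum 'I_n) /\
    pairwise (fun a b => z b <= z a) (s1 ++ c :: d :: s2).
Proof.
move=> cd zcd.
pose le := fun a b : 'I_n => z b <= z a.
have tot : total le by move=> a b; rewrite /le le_total.
have tr : transitive le by move=> a b e h1 h2; rewrite /le (le_trans h2 h1).
set s := sort le (rem d (enum 'I_n)).
have cs : c \in s by rewrite mem_sort rem_mem // mem_enum.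
have ps : pairwise le s by rewrite -sorted_pairwise // sort_sorted.
have ps0 : perm_eq s (rem d (enum 'I_n)) by rewrite perm_sort.
move: ps ps0; case/splitPr: cs => s1 s2 ps ps0.
exists s1, s2; split.
  apply: perm_trans (perm_ins s1 s2 c d) _.
  rewrite perm_sym; apply: perm_trans (perm_to_rem (mem_enum _ d)) _.
  by rewrite perm_cons perm_sym.
apply: pairwise_insert ps _ _ _; rewrite /le ?zcd //.
Qed.

Lemma M_pair p q c d l y : M p q (c :: d :: l) y = y c * mg R (col c) p q +
  y d * mg R (col d) (np (col c) p) (nq (col c) q) +
  M (np (col d) (np (col c) p)) (nq (col d) (nq (col c) q)) l y.
Proof. by rewrite /= addrA. Qed.


Lemma uniq_adj s1 s2 (c d : 'I_n) : uniq (s1 ++ c :: d :: s2) ->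
  [/\ c \notin s1, d \notin s1, c \notin s2, d \notin s2 & c != d].
Proof.
rewrite cat_uniq /= in_cons !negb_or => /and5P [_ /and3P [hc1 hd1 _] /andP [cd c2] d2 _].
by split.
Qed.

Lemma eqb_out (y : 'I_n -> R) c d a : a != c -> a != d -> equilibrate y c d a = y a.
Proof. by move=> h1 h2; rewrite /equilibrate (negbTE h1) (negbTE h2). Qed.

Lemma strat_le st : valid_strategy st -> forall (y : 'I_n -> R) s,
  perm_eq s (enum 'I_n) -> pairwise (fun a b => y b <= y a) s ->
  blue_total col (run_strategy y st) <= M 0 K s y.
Proof.
elim: st => [|[c d] st IH] /=.
  move=> _ y s ps hs.
  set bf := filter col (enum 'I_n) ++ filter (predC col) (enum 'I_n).
  have pbf : perm_eq bf (enum 'I_n) by rewrite /bf perm_filterC.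
  have nbf : nrb bf.
    rewrite /bf; move: (filter_all col (enum 'I_n)).
    have : ~~ has col (filter (predC col) (enum 'I_n)).
      by apply/hasPn => x; rewrite mem_filter /= => /andP [].
    move=> h2; elim: (filter col _) => [|a e IHe] /=.
      by move: h2; case: (filter (predC col) _) => //= a l; case: (col a).
    by case/andP=> -> h1; apply: IHe.
  rewrite (blue_M y pbf nbf).
  have pb : perm_eq bf s by apply: perm_trans pbf _; rewrite perm_sym.
  exact: (M_edmonds hs pb).
case/andP=> /= cd vst y s ps hs.
set z := equilibrate y c d.
have zcd : z c = z d by rewrite /z /equilibrate eqxx eqxx orbT.
have [s1 [s2 [pz hz]]] := sorted_adj cd zcd.
apply: le_trans (IH vst z _ pz hz) _.
have [c1 d1 c2 d2 _] := uniq_adj (etrans (perm_uniq pz) (enum_uniq _)).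
have e1 : M 0 K s1 z = M 0 K s1 y.
  apply: M_eq_in => a ha; apply: eqb_out; apply/eqP => e; [move: c1 | move: d1]; by rewrite -e ha.
have e2 : forall p q, M p q s2 z = M p q s2 y.
  move=> p q; apply: M_eq_in => a ha; apply: eqb_out; apply/eqP => e; [move: c2 | move: d2]; by rewrite -e ha.
have zc : z c = (y c + y d) / 2 by rewrite /z /equilibrate eqxx.
have zd : z d = (y c + y d) / 2 by rewrite -zcd.
rewrite M_cat M_pair e1 e2 zc zd.
set P := (0 + _)%N; set Q := (K - _)%N.
have ps' : perm_eq (enum 'I_n) s by rewrite perm_sym.
have [ydc|ycd] := leP (y d) (y c).
  apply: (le_trans _ (M_edmonds hs (perm_trans pz ps') 0 K)).
  rewrite M_cat M_pair -!addrA lerD2l !addrA lerD2r -mulrDr.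
  apply: mid_le => //; exact: mg_chain.
have sw' : perm_eq (s1 ++ [:: d, c & s2]) (s1 ++ [:: c, d & s2]) by rewrite perm_sym perm_sw.
apply: (le_trans _ (M_edmonds hs (perm_trans (perm_trans sw' pz) ps') 0 K)).
rewrite M_cat M_pair -!addrA lerD2l.
have cnt : forall Pr, count Pr (s1) = count Pr s1 by [].
rewrite (np_comm (col d)) (nq_comm (col d)) !addrA lerD2r -mulrDr (mg_sum R (col c) (col d)).
rewrite (addrC (y c)).
apply: mid_le; [exact: ltW | exact: mg_chain].
Qed.


Lemma step_inv (s s' : state R n) : proc_step col s s' -> perm_eq s.2 (enum 'I_n) ->
  perm_eq s'.2 (enum 'I_n) /\ M 0 K s'.2 s'.1 = M 0 K s.2 s.1.
Proof.
case=> r1 [r2 [a [b [e2 ca cb e1' e2']]]] ps.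
rewrite e2' e1'; rewrite e2 in ps *.
split; first exact: perm_trans (perm_sw r1 r2 b a) ps.
have [a1 b1 a2 b2 _] := uniq_adj (etrans (perm_uniq ps) (enum_uniq _)).
set x := s.1.
have e1 : M 0 K r1 (equilibrate x a b) = M 0 K r1 x.
  apply: M_eq_in => t ht; apply: eqb_out; apply/eqP => e; [move: a1 | move: b1]; by rewrite -e ht.
have e3 : forall p q, M p q r2 (equilibrate x a b) = M p q r2 x.
  move=> p q; apply: M_eq_in => t ht; apply: eqb_out; apply/eqP => e; [move: a2 | move: b2]; by rewrite -e ht.
rewrite !M_cat !M_pair e1 e3 (negbTE ca) cb.
rewrite /equilibrate !eqxx orbT orTb.
set P := (0 + _)%N; set Q := (K - _)%N.
have h1 := mg_rb R P Q.
have h2 := mg_sum R false true P Q.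
rewrite /np /nq in h2 *; cbn -[F M mg] in h2 |- *.
have h3 : mg R false P Q.-1 = mg R false P Q + mg R true P.+1 Q - mg R true P Q.
by rewrite h2 addrAC subrr add0r.
rewrite h3 -h1.
by field.
Qed.

Lemma reach_inv (s s' : state R n) : reaches col s s' -> perm_eq s.2 (enum 'I_n) ->
  perm_eq s'.2 (enum 'I_n) /\ M 0 K s'.2 s'.1 = M 0 K s.2 s.1.
Proof.
elim => [s0|s0 s1 s2 st _ IH] h; first by split.
have [p1 e1] := step_inv st h; have [p2 e2] := IH p1; split=> //; by rewrite e2 e1.
Qed.

Fixpoint inv (l : seq 'I_n) : nat :=
  if l is a :: l' then ((if col a then 0 else count col l') + inv l')%N else 0%N.

Lemma inv_cat l1 l2 : inv (l1 ++ l2) = (inv l1 + count (predC col) l1 * count col l2 + inv l2)%N.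
Proof.
elim: l1 => [|a l1 IH] //=; rewrite IH count_cat; case: (col a) => /=; nia.
Qed.

Lemma step_dec (s s' : state R n) : proc_step col s s' -> (inv s'.2).+1 = inv s.2.
Proof.
case=> r1 [r2 [a [b [e2 ca cb _ e2']]]].
rewrite e2' e2 !inv_cat /= (negbTE ca) cb /=; lia.
Qed.

Lemma rlob_adj r : red_left_of_blue col r ->
  exists r1 r2 a b, r = r1 ++ a :: b :: r2 /\ ~~ col a /\ col b.
Proof.
case=> r1 [r2 [r3 [a [b [-> ca cb]]]]].
elim: r2 r1 a ca => [|c r2 IH] r1 a ca.
  by exists r1, r3, a, b.
case cc: (col c).
  by exists r1, (r2 ++ b :: r3), a, c.
have [r1' [r2' [a' [b' [e h]]]]] := IH (r1 ++ [:: a]) c (negbT cc).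
by exists r1', r2', a', b'; rewrite -e -catA.
Qed.

Lemma main_sec (x0 : 'I_n -> R) (r0 : seq 'I_n) :
  initial_row col x0 r0 ->
  (forall f : nat -> state R n, f 0%N = (x0, r0) ->
      ~ (forall k, proc_step col (f k) (f k.+1))) /\
  (forall s, reaches col (x0, r0) s -> red_left_of_blue col s.2 ->
      exists s', proc_step col s s') /\
  (forall s, reaches col (x0, r0) s -> ~ red_left_of_blue col s.2 ->
      forall strat : seq ('I_n * 'I_n), valid_strategy strat ->
        blue_total col (run_strategy x0 strat) <= blue_total col s.1).
Proof.
case=> pr hr.
have hs : pairwise (fun a b => x0 b <= x0 a) r0.
  apply: sub_pairwise hr => a b /orP [/ltW //|/andP [/eqP -> _]]; exact: lexx.
split.
  move=> f f0 hf.
  have H : forall k, (inv (f k).2 + k)%N = inv r0.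
    elim=> [|k IHk]; first by rewrite f0 addn0.
    have := step_dec (hf k); lia.
  have := H (inv r0).+1; lia.
split.
  move=> s _ /rlob_adj [r1 [r2 [a [b [e [ca cb]]]]]].
  exists (equilibrate s.1 a b, r1 ++ b :: a :: r2); by exists r1, r2, a, b; split.
move=> s rs nr strat vs.
have [ps es] := reach_inv rs pr.
rewrite (blue_M s.1 ps (rlob_nrb nr)) es /=.
exact: strat_le vs x0 r0 pr hs.
Qed.

End Lists.

Theorem mainTheorem3 (R : realFieldType) (n : nat)
    (col : 'I_n -> bool) (x0 : 'I_n -> R) (r0 : seq 'I_n) :
  initial_row col x0 r0 ->
  (* termination: no infinite execution of the procedure *)
  (forall f : nat -> state R n, f 0%N = (x0, r0) ->
      ~ (forall k, proc_step col (f k) (f k.+1))) /\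
  (* the procedure never gets stuck while the loop condition holds *)
  (forall s, reaches col (x0, r0) s -> red_left_of_blue col s.2 ->
      exists s', proc_step col s s') /\
  (* optimality of any final state *)
  (forall s, reaches col (x0, r0) s -> ~ red_left_of_blue col s.2 ->
      forall strat : seq ('I_n * 'I_n), valid_strategy strat ->
        blue_total col (run_strategy x0 strat) <= blue_total col s.1).
Proof. exact: main_sec. Qed.
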